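(* Let $F$ be a nontrivial finite group, $\tfrac12<p<1$, and let $R_n=((L_n(i))_i,S_n)$ be the stationary random walk on $F\wr\mathbb{Z}$ with parameter $p$. Let $\rho_0=0$ and $\rho_k=\inf\{n>\rho_{k-1}:S_n=0\}$, and for $k\ge1$ let $M_k^+=\max_{0\le j\le\rho_k}S_j$ and $M_k^-=\min_{0\le j\le\rho_k}S_j$. Then for every $k\ge1$, \[\Pr(R_{\rho_k}=\mathrm{id}\mid S_0,S_1,\dots,S_{\rho_k})=|F|^{-(M_k^+-M_k^-+1)}.\]
   Context: Elements of $F\wr\mathbb{Z}$ are pairs $((L(i))_{i\in\mathbb{Z}},x)$ with $L:\mathbb{Z}\to F$ finitely supported and $x\in\mathbb{Z}$; $\mathrm{id}$ has all lamps $\mathrm{id}_F$ and $x=0$. $(S_n)$ is the Markov chain on $\mathbb{Z}$ with $S_0=0$ and $\Pr(S_{n+1}=x+1\mid S_n=x)$ equal to $p,\tfrac12,1-p$ for $x<0,x=0,x>0$ respectively, and $\Pr(S_{n+1}=x-1\mid S_n=x)$ equal to $1-p,\tfrac12,p$ respectively. $(U_n,V_n)_{n\ge1}$ are i.i.d. pairs of independent uniform elements of $F$, independent of $(S_n)$; $L_0\equiv\mathrm{id}_F$, $L_{n+1}(i)=L_n(i)$ for $i\notin\{S_n,S_{n+1}\}$, $L_{n+1}(S_n)=U_{n+1}$, $L_{n+1}(S_{n+1})=V_{n+1}$. The times $\rho_k$ are a.s. finite. *)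

(* Defs.v *)
(* (discrete probability written out as finite sums). *)
From HB Require Import structures.
From mathcomp Require Import all_boot all_order all_algebra all_fingroup.
From mathcomp Require Import boolp.
Set Implicit Arguments. Unset Strict Implicit. Unset Printing Implicit Defensive.
Import Order.TTheory GRing.Theory Num.Theory.
Local Open Scope ring_scope.

Definition stepP (R : realFieldType) (p : R) (x y : int) : R :=
  if y == x + 1 then (if x < 0 then p else if x == 0 then 2^-1 else 1 - p)
  else if y == x - 1 then (if x < 0 then 1 - p else if x == 0 then 2^-1 else p)
  else 0.

Definition pathprob (R : realFieldType) (p : R) (s : nat -> int) (m : nat) : R :=
  (s 0%N == 0)%:R * \prod_(i < m) stepP p (s i) (s i.+1).

(* Lamp configuration L_n driven by the path s and the lamp choices
   u n = (U_{n+1}, V_{n+1}). *)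
Fixpoint lamps (gT : finGroupType) (s : nat -> int) (u : nat -> gT * gT)
    (n : nat) : int -> gT :=
  match n with
  | 0%N => fun _ => 1%g
  | n'.+1 => fun i =>
      if i == s n'.+1 then (u n').2
      else if i == s n' then (u n').1
      else lamps s u n' i
  end.

Definition lampseq (gT : finGroupType) (m : nat) (t : m.-tuple (gT * gT))
  : nat -> gT * gT := fun n => nth (1%g, 1%g) t n.

Definition is_id (gT : finGroupType) (L : int -> gT) (x : int) : Prop :=
  (forall i, L i = 1%g) /\ x = 0.

(* Joint probability Pr(S_0..S_m = s, (U_j,V_j)_{1<=j<=m} = t): S independent of
   the i.i.d. uniform pairs (U_j, V_j) on F x F. *)
Definition jointprob (R : realFieldType) (gT : finGroupType) (p : R)
    (s : nat -> int) (m : nat) (t : m.-tuple (gT * gT)) : R :=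
  pathprob p s m * ((#|gT|%:R ^+ 2)^-1) ^+ m.

(* rho_k = m is determined by the path: m > 0, S_m = 0 and exactly k
   indices j in 1..m with S_j = 0. *)
Definition rho_eq (s : nat -> int) (k m : nat) : bool :=
  [&& (0 < m)%N, s m == 0 & count (fun j => s j == 0) (iota 1 m) == k].

(* Pr(R_{rho_k} = id | S_0, ..., S_{rho_k}) on the event
   {rho_k = m, (S_0..S_m) = s}: the ratio
   Pr(R_m = id, rho_k = m, S_{0..m} = s) / Pr(rho_k = m, S_{0..m} = s). *)
Definition condprob_id (R : realFieldType) (gT : finGroupType) (p : R)
    (s : nat -> int) (k m : nat) : R :=
  (\sum_(t : m.-tuple (gT * gT) | rho_eq s k m && `[< is_id (lamps s (lampseq t) m) (s m) >])
      jointprob p s t)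
  / (\sum_(t : m.-tuple (gT * gT) | rho_eq s k m) jointprob p s t).

Definition Mplus (s : nat -> int) (m : nat) : int := \big[Num.max/s 0%N]_(j < m.+1) s j.
Definition Mminus (s : nat -> int) (m : nat) : int := \big[Num.min/s 0%N]_(j < m.+1) s j.

(* Main.v *)
Require Import Defs.
From HB Require Import structures.
From mathcomp Require Import all_boot all_order all_algebra all_fingroup.
From mathcomp Require Import boolp ring.
Import Order.TTheory GRing.Theory Num.Theory.
Local Open Scope ring_scope.

Lemma sum_tupleS (R : nmodType) (T : finType) m (F : m.+1.-tuple T -> R) :
  \sum_(t : m.+1.-tuple T) F t = \sum_(t : m.-tuple T) \sum_(x : T) F [tuple of rcons t x].
Proof.
rewrite pair_big /=.
pose h (p : m.-tuple T * T) : m.+1.-tuple T := [tuple of rcons p.1 p.2].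
pose g (t : m.+1.-tuple T) : m.-tuple T * T :=
  ([tuple of belast (thead t) (behead t)], last (thead t) (behead t)).
rewrite (reindex h) //=.
apply: onW_bij; exists g => [[t x]|t].
  rewrite /g /h /=.
  have E : rcons t x = thead [tuple of rcons t x] :: behead [tuple of rcons t x].
    by have := tuple_eta [tuple of rcons t x]; move/(congr1 val).
  have := lastI (thead [tuple of rcons t x]) (behead [tuple of rcons t x]).
  rewrite -E => /rcons_inj [E1 E2].
  by rewrite -E2; congr (_, _); apply/val_inj; rewrite /= -E1.
apply/val_inj; rewrite /h /g /=.
by rewrite -lastI; have := tuple_eta t; move/(congr1 val).
Qed.

Definition Xup (X : int -> bool) (a b : int) : int -> bool :=
  fun i => [|| X i, i == a | i == b].

Lemma lamps_ext (gT : finGroupType) (s : nat -> int) (u u' : nat -> gT * gT) m :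
  (forall n, (n < m)%N -> u n = u' n) -> forall i, lamps s u m i = lamps s u' m i.
Proof.
elim: m => [//|m IH] H i /=.
rewrite H // IH // => n Hn; apply: H; exact: ltnW.
Qed.

Lemma lampseq_rcons (gT : finGroupType) m (t : m.-tuple (gT * gT)) x n :
  lampseq [tuple of rcons t x] n = if (n < m)%N then lampseq t n else
     if n == m then x else (1%g, 1%g).
Proof. by rewrite /lampseq /= nth_rcons size_tuple. Qed.

Lemma cond_rcons (gT : finGroupType) (s : nat -> int) m (t : m.-tuple (gT * gT)) a b X :
  `[< forall i, ~~ X i -> lamps s (lampseq [tuple of rcons t (a,b)]) m.+1 i = 1%g >] =
  [&& `[< forall i, ~~ Xup X (s m) (s m.+1) i -> lamps s (lampseq t) m i = 1%g >],
      X (s m) || (s m == s m.+1) || (a == 1%g) & X (s m.+1) || (b == 1%g)].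
Proof.
have L : forall i, lamps s (lampseq [tuple of rcons t (a,b)]) m.+1 i =
   if i == s m.+1 then b else if i == s m then a else lamps s (lampseq t) m i.
  move=> i /=; rewrite lampseq_rcons ltnn eqxx /=.
  by rewrite (@lamps_ext _ s _ (lampseq t)) // => n Hn; rewrite lampseq_rcons Hn.
apply/asboolP/and3P => [H|[/asboolP H1 H2 H3] i Xi].
  split.
  - apply/asboolP => i; rewrite /Xup !negb_or => /and3P [Xi n1 n2].
    by have := H i Xi; rewrite L (negbTE n1) (negbTE n2).
  - case: (X (s m)) (H (s m)) => // Hsm /=; case: eqP => //= ne.
    by apply/eqP; have := Hsm isT; rewrite L eqxx; case: eqP => // /esym.
  - case: (X (s m.+1)) (H (s m.+1)) => // Hsm /=.
    by apply/eqP; have := Hsm isT; rewrite L eqxx.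
rewrite L; case: eqP => [E|ne1].
  by move: H3 Xi; rewrite E => /orP [->|/eqP ->].
case: eqP => [E|ne2].
  move: H2 Xi; rewrite E => /orP [/orP [->//|/eqP e]|/eqP -> //].
  by case: ne1; rewrite E.
apply: H1; rewrite /Xup (negbTE Xi) /=; apply/norP; split; exact/eqP.
Qed.

Definition SS (R : realFieldType) (gT : finGroupType) (s : nat -> int) m (X : int -> bool) : R :=
  \sum_(t : m.-tuple (gT * gT) | `[< forall i, ~~ X i -> lamps s (lampseq t) m i = 1%g >]) 1.

Lemma sum_ind (R : realFieldType) (gT : finGroupType) (c : bool) :
  \sum_(a : gT) ((c || (a == 1%g))%:R : R) = if c then #|gT|%:R else 1.
Proof.
case: c => /=.
  by rewrite sumr_const cardT -cardE.
rewrite (bigD1 1%g) //= eqxx big1 ?addr0 // => a /negbTE ->; done.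
Qed.

Lemma sum_pair (R : nmodType) (gT : finType) (F : gT * gT -> R) :
  \sum_(x : gT * gT) F x = \sum_(a : gT) \sum_(b : gT) F (a, b).
Proof. by rewrite pair_big; apply: eq_bigr => -[a b]. Qed.

Lemma ifb (R : realFieldType) (b : bool) : (if b then 1 else 0 : R) = b%:R.
Proof. by case: b. Qed.

Lemma SS_rec (R : realFieldType) (gT : finGroupType) s m X :
  SS R gT s m.+1 X = SS R gT s m (Xup X (s m) (s m.+1)) *
     (if X (s m) || (s m == s m.+1) then #|gT|%:R else 1) *
     (if X (s m.+1) then #|gT|%:R else 1).
Proof.
rewrite /SS big_mkcond sum_tupleS [in RHS]big_mkcond -sum_ind -sum_ind.
rewrite !mulr_suml; apply: eq_bigr => t _.
rewrite sum_pair -mulrA mulr_suml mulr_sumr; apply: eq_bigr => a _.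
rewrite !mulr_sumr; apply: eq_bigr => b _.
rewrite cond_rcons !ifb.
by case: `[< _ >]; case: (_ || _); case: (_ || _); rewrite /= ?mul1r ?mul0r ?mulr1 ?mulr0.
Qed.

Fixpoint dd (s : nat -> int) (n : nat) (X : int -> bool) : nat :=
  match n with
  | 0%N => 0%N
  | n.+1 => ((~~ X (s n.+1)) + (~~ X (s n) && (s n != s n.+1)) + dd s n (Xup X (s n) (s n.+1)))%N
  end.

Lemma SS0 (R : realFieldType) (gT : finGroupType) s X : SS R gT s 0 X = 1.
Proof.
rewrite /SS (eq_bigl xpredT); last by move=> t; apply/asboolP.
by rewrite sumr_const cardT -cardE card_tuple expn0.
Qed.

Lemma SS_dd (R : realFieldType) (gT : finGroupType) s m X :
  SS R gT s m X * (#|gT|%:R) ^+ dd s m X = (#|gT|%:R) ^+ (2 * m).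
Proof.
elim: m X => [|m IH] X; first by rewrite SS0 /= !expr0 mulr1.
rewrite SS_rec /= !exprD.
rewrite [X in _ = X](_ : _ = #|gT|%:R ^+ 2 * #|gT|%:R ^+ (2 * m)); last by rewrite -exprD mulnS.
rewrite -(IH (Xup X (s m) (s m.+1))).
move: (SS _ _ _ _ _) (_ ^+ dd _ _ _) => A B.
by case: (X (s m.+1)); case: (X (s m)); case: (s m == s m.+1); rewrite /= ?expr0 ?expr1; ring.
Qed.

From mathcomp Require Import zify.

Lemma dd_ext s n X Y : X =1 Y -> dd s n X = dd s n Y.
Proof.
elim: n X Y => [//|n IH] X Y H /=.
rewrite !H (IH _ (Xup Y (s n) (s n.+1))) // => i.
by rewrite /Xup H.
Qed.

Lemma bigmax_idx (F : nat -> int) x y r :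
  \big[Num.max/Num.max y x]_(j <- r) F j = Num.max (\big[Num.max/x]_(j <- r) F j) y.
Proof.
elim: r => [|i r IH]; first by rewrite !big_nil; lia.
rewrite !big_cons IH; lia.
Qed.
Lemma bigmin_idx (F : nat -> int) x y r :
  \big[Num.min/Num.min y x]_(j <- r) F j = Num.min (\big[Num.min/x]_(j <- r) F j) y.
Proof.
elim: r => [|i r IH]; first by rewrite !big_nil; lia.
rewrite !big_cons IH; lia.
Qed.

Lemma MplusS s n : Mplus s n.+1 = Num.max (Mplus s n) (s n.+1).
Proof.
rewrite /Mplus -!(big_mkord xpredT (fun j => s j)) /index_iota !subn0.
by rewrite -addn1 iotaD add0n cats1 big_rcons_op /= bigmax_idx.
Qed.
Lemma MminusS s n : Mminus s n.+1 = Num.min (Mminus s n) (s n.+1).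
Proof.
rewrite /Mminus -!(big_mkord xpredT (fun j => s j)) /index_iota !subn0.
by rewrite -addn1 iotaD add0n cats1 big_rcons_op /= bigmin_idx.
Qed.
Lemma Mplus0 s : Mplus s 0 = s 0%N.
Proof. rewrite /Mplus -(big_mkord xpredT (fun j => s j)) /index_iota /= big_cons big_nil; lia. Qed.
Lemma Mminus0 s : Mminus s 0 = s 0%N.
Proof. rewrite /Mminus -(big_mkord xpredT (fun j => s j)) /index_iota /= big_cons big_nil; lia. Qed.

Lemma Mbounds s n : Mminus s n <= s n <= Mplus s n.
Proof.
case: n => [|n]; first by rewrite Mplus0 Mminus0 lexx.
rewrite MplusS MminusS; lia.
Qed.

Lemma dd_int s n (lo hi : int) :
  (forall j, (j < n)%N -> (s j.+1 = s j + 1 :> int) \/ (s j.+1 = s j - 1 :> int)) ->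
  (lo <= s n :> int) && (s n <= hi :> int) ->
  (dd s n (fun i => lo <= i <= hi))%:Z =
  (Num.max hi (Mplus s n) - Num.min lo (Mminus s n) + 1) - (hi - lo + 1).
Proof.
elim: n lo hi => [|n IH] lo hi hs hlo.
  rewrite Mplus0 Mminus0 /=; lia.
rewrite /=.
have hn := hs n (ltnSn n).
rewrite (@dd_ext _ _ _ (fun i => Num.min lo (s n) <= i <= Num.max hi (s n))); last first.
  move=> i; rewrite /Xup; apply/idP/idP => H; lia.
rewrite PoszD PoszD IH; last 2 first.
- by move=> j hj; apply: hs; apply: ltnW.
- lia.
have := Mbounds s n.
rewrite MplusS MminusS.
rewrite hlo /=.
case H: (lo <= s n <= hi); case: eqP => /= E; move: hlo E H; case: hn; move: (Mplus s n) (Mminus s n) (s n) (s n.+1) => A B C D; lia.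
Qed.

Lemma dd_main s m : (0 < m)%N ->
  (forall j, (j < m)%N -> (s j.+1 = s j + 1 :> int) \/ (s j.+1 = s j - 1 :> int)) ->
  (dd s m (fun _ => false))%:Z = Mplus s m - Mminus s m + 1.
Proof.
case: m => [//|m] _ hs /=.
have hn := hs m (ltnSn m).
rewrite (@dd_ext _ _ _ (fun i => Num.min (s m) (s m.+1) <= i <= Num.max (s m) (s m.+1))); last first.
  move=> i; rewrite /Xup /=; apply/idP/idP => H; case: hn => E; lia.
rewrite PoszD PoszD dd_int; last 2 first.
- by move=> j hj; apply: hs; apply: ltnW.
- case: hn => E; lia.
have := Mbounds s m.
rewrite MplusS MminusS.
case: eqP => /= E; move: E; case: hn; move: (Mplus s m) (Mminus s m) (s m) (s m.+1) => A B C D; lia.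
Qed.

Lemma steps_of_pos {R : realFieldType} {p : R} {s : nat -> int} {m} :
  0 < p -> p < 1 -> 0 < pathprob p s m ->
  forall j, (j < m)%N -> (s j.+1 = s j + 1 :> int) \/ (s j.+1 = s j - 1 :> int).
Proof.
move=> p0 p1 hpos j hj.
have : \prod_(i < m) stepP p (s i) (s i.+1) != 0.
  by apply: contraTneq hpos => E; rewrite /pathprob E mulr0 ltxx.
move/prodf_neq0 => /(_ (Ordinal hj) isT).
rewrite /stepP /=.
case E1: (s j.+1 == s j + 1); first by left; apply/eqP.
case E2: (s j.+1 == s j - 1); first by right; apply/eqP.
by rewrite eqxx.
Qed.

Theorem proposition2p2 (R : realFieldType) (gT : finGroupType) (p : R)
  (hF : (1 < #|gT|)%N) (hp1 : 2^-1 < p) (hp2 : p < 1)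
  (k : nat) (hk : (0 < k)%N) (m : nat) (s : nat -> int)
  (hrho : rho_eq s k m) (hpos : 0 < pathprob p s m) :
  condprob_id gT p s k m = (#|gT|%:R : R) ^ (- (Mplus s m - Mminus s m + 1)).
Proof.
have p0 : 0 < p by apply: lt_trans hp1; rewrite invr_gt0 ltr0n.
have hs := steps_of_pos p0 hp2 hpos.
case/and3P: (hrho) => m0 /eqP sm0 _.
rewrite -dd_main // -exprnN.
set N : R := #|gT|%:R.
have N0 : N != 0 by rewrite /N pnatr_eq0 -lt0n; apply: ltnW.
rewrite /condprob_id /jointprob.
set c := pathprob p s m * _.
have c0 : c != 0.
  by rewrite /c mulf_neq0 ?expf_neq0 ?invr_eq0 ?expf_neq0 // gt_eqF.
have hsum : forall P : pred (m.-tuple (gT * gT)), \sum_(t | P t) c = c * \sum_(t | P t) 1.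
  by move=> P; rewrite mulr_sumr; apply: eq_bigr => *; rewrite mulr1.
rewrite !hsum.
rewrite (eq_bigl (fun t => `[< forall i, ~~ (fun _ => false) i -> lamps s (lampseq t) m i = 1%g >])); last first.
  move=> t; rewrite hrho /=; apply/asboolP/asboolP => [[H _] i _|H]; first exact: H.
  by split => // i; apply: H.
have -> : \sum_(t : m.-tuple (gT * gT) | rho_eq s k m) (1 : R) = \sum_(t : m.-tuple (gT * gT)) 1.
  by apply: eq_bigl => t; rewrite hrho.
have hS := SS_dd R gT s m (fun _ => false).
rewrite /SS in hS.
move: hS; set S := \sum_(t | _) 1 => hS.
rewrite sumr_const cardT -cardE card_tuple card_prod.
have -> : (1 *+ (#|gT| * #|gT|) ^ m : R) = N ^+ (2 * m).
  by rewrite /N -natrX expnM mulnn.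
rewrite -hS -/N.
have S0 : S != 0.
  apply: contra_neq (expf_neq0 (2 * m) N0); rewrite -hS => ->; by rewrite mul0r.
have Nd : N ^+ dd s m xpred0 != 0 by apply: expf_neq0.
by field; rewrite ?c0 ?S0 ?Nd.
Qed.
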